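(* The LoRA-Null residual weight is in general not a solution of either of the following two problems. Precisely: there exist dimensions $n, m, N$ with $N \ge m$, a matrix $\mathbf{W}_0 \in \mathbb{R}^{n\times m}$ of rank $R$, a matrix $\mathbf{X}_{\text{pre}} \in \mathbb{R}^{m \times N}$, and an integer $1 \le r < R$ with $r<\min(n,m)$, such that the LoRA-Null residual $\mathbf{W}_0' = \mathbf{W}_0 - \mathbf{B}\mathbf{A}$ (defined below) is neither a solution of $$\text{(P1)}\quad \min_{\mathbf{W}'} \|\mathbf{W}' - \mathbf{W}_0\|_{\mathrm F} \ \text{ s.t. } \operatorname{rank}(\mathbf{W}') = R - r,$$ nor a solution of $$\text{(P2)}\quad \min_{\mathbf{W}'} \|\mathbf{W}'\mathbf{X}_{\text{pre}} - \mathbf{W}_0\mathbf{X}_{\text{pre}}\|_{\mathrm F} \ \text{ s.t. } \operatorname{rank}(\mathbf{W}') = R - r,$$ where both minimizations range over $\mathbf{W}' \in \mathbb{R}^{n\times m}$.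
   Context: LoRA-Null construction: given $\mathbf{W}_0 \in \mathbb{R}^{n\times m}$, $\mathbf{X}_{\text{pre}} \in \mathbb{R}^{m\times N}$ and a rank $r$, take an SVD $\mathbf{X}_{\text{pre}} = \mathbf{U}\mathbf{\Sigma}\mathbf{V}^\top$ with $\mathbf{U} \in \mathbb{R}^{m\times m}$ orthogonal and singular values in non-increasing order, and let $\mathbf{U}_{\text{null}} = \mathbf{U}_{[:,-r:]} \in \mathbb{R}^{m\times r}$ be the last $r$ columns of $\mathbf{U}$ (left singular vectors of the $r$ smallest singular values). Take an SVD $\mathbf{W}_0\mathbf{U}_{\text{null}}\mathbf{U}_{\text{null}}^\top = \mathbf{U}'\mathbf{\Sigma}'\mathbf{V}'^\top$ with singular values in non-increasing order and set $\mathbf{B} = \mathbf{U}'_{[:,:r]}\sqrt{\mathbf{\Sigma}'_{[:r]}}$, $\mathbf{A} = \sqrt{\mathbf{\Sigma}'_{[:r]}}\,\mathbf{V}'^\top_{[:r,:]}$. The LoRA-Null residual weight is $\mathbf{W}_0' = \mathbf{W}_0 - \mathbf{B}\mathbf{A}$ (which equals $\mathbf{W}_0 - \mathbf{W}_0\mathbf{U}_{\text{null}}\mathbf{U}_{\text{null}}^\top$). Notation: $\mathbf{M}_{[:,:k]}$, $\mathbf{M}_{[:,-k:]}$ are the first/last $k$ columns, $\mathbf{M}_{[:k,:]}$ the first $k$ rows, $\mathbf{\Sigma}_{[:k]}$ the leading $k\times k$ diagonal block; $\|\cdot\|_{\mathrm F}$ is the Frobenius norm. *)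

(* Defs.v *)
From HB Require Import structures.
From mathcomp Require Import all_boot all_order all_algebra.
From mathcomp Require Import Rstruct.
From Stdlib Require Rdefinitions.
Set Implicit Arguments. Unset Strict Implicit. Unset Printing Implicit Defensive.
Import Order.TTheory GRing.Theory Num.Theory.
Local Open Scope ring_scope.

Notation Real := Rdefinitions.R.

Definition frob (p q : nat) (A : 'M[Real]_(p, q)) : Real :=
  Num.sqrt (\sum_(i < p) \sum_(j < q) A i j ^+ 2).

Definition is_svd (p q : nat) (X : 'M[Real]_(p, q))
    (U : 'M[Real]_p) (S : 'M[Real]_(p, q)) (V : 'M[Real]_q) : Prop :=
  [/\ U^T *m U = 1%:M, V^T *m V = 1%:M, X = U *m S *m V^T,
      (forall (i : 'I_p) (j : 'I_q), val i <> val j -> S i j = 0) /\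
      (forall (i : 'I_p) (j : 'I_q), val i = val j -> 0 <= S i j) &
      (forall (i i' : 'I_p) (j j' : 'I_q), val i = val j -> val i' = val j' ->
          (val i <= val i')%N -> S i' j' <= S i j)].

(* M_[:, :k] : first k columns (meaningful for k <= q). *)
Definition first_cols (k p q : nat) (M : 'M[Real]_(p, q)) : 'M[Real]_(p, k) :=
  \matrix_(i < p, j < k) \sum_(l < q | val l == val j) M i l.

(* M_[:, -k:] : last k columns (meaningful for k <= q). *)
Definition last_cols (k p q : nat) (M : 'M[Real]_(p, q)) : 'M[Real]_(p, k) :=
  \matrix_(i < p, j < k) \sum_(l < q | val l == (q - k + val j)%N) M i l.

(* M_[:k, :] : first k rows (meaningful for k <= p). *)
Definition first_rows (k p q : nat) (M : 'M[Real]_(p, q)) : 'M[Real]_(k, q) :=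
  \matrix_(i < k, j < q) \sum_(l < p | val l == val i) M l j.

(* Sigma_[:k] : leading k x k block (meaningful for k <= min p q). *)
Definition lead_block (k p q : nat) (M : 'M[Real]_(p, q)) : 'M[Real]_k :=
  first_rows k (first_cols k M).

(* Entrywise square root; on a nonnegative diagonal matrix this is its square root. *)
Definition sqrt_diag (k : nat) (D : 'M[Real]_k) : 'M[Real]_k :=
  map_mx Num.sqrt D.

Definition Unull (m r : nat) (U : 'M[Real]_m) : 'M[Real]_(m, r) :=
  last_cols r U.

Definition loraB (n m r : nat) (U' : 'M[Real]_n) (S' : 'M[Real]_(n, m))
  : 'M[Real]_(n, r) :=
  first_cols r U' *m sqrt_diag (lead_block r S').

Definition loraA (n m r : nat) (S' : 'M[Real]_(n, m)) (V' : 'M[Real]_m)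
  : 'M[Real]_(r, m) :=
  sqrt_diag (lead_block r S') *m first_rows r V'^T.

Definition solves_P1 (n m : nat) (W0 : 'M[Real]_(n, m)) (k : nat)
    (W' : 'M[Real]_(n, m)) : Prop :=
  \rank W' = k /\
  forall W'' : 'M[Real]_(n, m), \rank W'' = k -> frob (W' - W0) <= frob (W'' - W0).

Definition solves_P2 (n m N : nat) (W0 : 'M[Real]_(n, m)) (X : 'M[Real]_(m, N))
    (k : nat) (W' : 'M[Real]_(n, m)) : Prop :=
  \rank W' = k /\
  forall W'' : 'M[Real]_(n, m), \rank W'' = k ->
    frob (W' *m X - W0 *m X) <= frob (W'' *m X - W0 *m X).

(* Main.v *)
Require Import Defs.
From mathcomp Require Import all_boot all_order all_algebra.
From mathcomp Require Import Rstruct.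
Import Order.TTheory GRing.Theory Num.Theory.
Local Open Scope ring_scope.

Definition W0e : 'M[Real]_(2,3) := \matrix_(i<2,j<3) (if val i == val j then 1 else 0).
Definition dX : 'rV[Real]_3 := \row_(j<3) (if (val j < 2)%N then 1 else 0).
Definition Xe : 'M[Real]_3 := diag_mx dX.

Ltac brute := rewrite ?mxE ?big_ord_recr ?big_ord0 /= ?mxE;
  try by rewrite ?mulr0 ?mulr1 ?mul0r ?mul1r ?addr0 ?add0r.

Lemma rankW0 : \rank W0e = 2%N.
Proof.
apply/eqP; apply/row_freeP; exists W0e^T.
apply/matrixP => i j; rewrite !mxE !big_ord_recr big_ord0 /= !mxE.
case: i => [[|[|?]] Hi] //; case: j => [[|[|?]] Hj] //=.
all: try by rewrite ?mulr0 ?mulr1 ?addr0 ?add0r.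
Qed.

Lemma detXe : \det Xe = 0.
Proof. rewrite /Xe det_diag !big_ord_recr big_ord0 /= !mxE /= mulr0. by []. Qed.

Definition i2 : 'I_3 := @Ordinal 3 2 isT.
Definition i0 : 'I_3 := @Ordinal 3 0 isT.
Definition i1 : 'I_3 := @Ordinal 3 1 isT.

Lemma svd_last (U S V : 'M[Real]_3) : is_svd Xe U S V ->
  U i0 i2 = 0 /\ U i1 i2 = 0.
Proof.
case=> HU HV HX [Hoff Hnn] Hord.
have HSd : S = diag_mx (\row_i S i i).
  apply/matrixP => i j; rewrite !mxE.
  case: eqP => [->|Hij] //=; rewrite mulr0n; apply: Hoff => Hv; apply: Hij; exact: val_inj.
have HdU : \det U != 0.
  apply/negP => /eqP H; move: (congr1 determinant HU).
  by rewrite det_mulmx H mulr0 det1 => /eqP; rewrite eq_sym oner_eq0.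
have HdV : \det V^T != 0.
  apply/negP => /eqP H; move: (congr1 determinant HV).
  by rewrite det_mulmx H mul0r det1 => /eqP; rewrite eq_sym oner_eq0.
have HdS : \det S = 0.
  move: detXe; rewrite HX !det_mulmx => /eqP.
  by rewrite !mulf_eq0 (negbTE HdU) (negbTE HdV) /= orbF => /eqP.
have S22 : S i2 i2 = 0.
  have Hk : forall k : 'I_3, S k k = 0 -> S i2 i2 = 0.
    move=> k Hz; apply/eqP; rewrite eq_le (Hnn i2 i2 erefl) andbT -Hz.
    by apply: (Hord k i2 k i2 erefl erefl); rewrite -ltnS ltn_ord.
  move: HdS; rewrite HSd det_diag => /eqP /prodf_eq0 [k _].
  by rewrite !mxE => /eqP; apply: Hk.
have HUX : U^T *m Xe = S *m V^T.
  by rewrite HX !mulmxA HU mul1mx.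
have E j : U j i2 * dX 0 j = 0.
  move/matrixP: HUX => /(_ i2 j).
  rewrite /Xe mul_mx_diag {1}HSd mul_diag_mx !mxE S22 mul0r.
  by [].
split.
- by move: (E i0); rewrite !mxE /= mulr1.
- by move: (E i1); rewrite !mxE /= mulr1.
Qed.

Lemma Unull_eq (U : 'M[Real]_3) : Unull 1 U = \matrix_(k<3, j<1) U k i2.
Proof.
apply/matrixP => k j; rewrite !mxE (big_pred1 i2) // => l.
by rewrite (ord1 j) /= -(inj_eq val_inj).
Qed.

Lemma W0Unull (U : 'M[Real]_3) : U i0 i2 = 0 -> U i1 i2 = 0 ->
  W0e *m Unull 1 U = 0.
Proof.
move=> H0 H1; rewrite Unull_eq; apply/matrixP => i j.
rewrite !mxE !big_ord_recr big_ord0 /= !mxE.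
have -> : (widen_ord (leqnSn 2) (widen_ord (leqnSn 1) ord_max)) = i0 by apply: val_inj.
have -> : (widen_ord (leqnSn 2) ord_max) = i1 by apply: val_inj.
rewrite H0 H1.
case: i => [[|[|?]] Hi] //=; by rewrite ?mulr0 ?mul0r ?addr0 ?add0r.
Qed.

Lemma svd_zero (n m : nat) (U' : 'M[Real]_n) (S' : 'M[Real]_(n, m)) V' :
  is_svd 0 U' S' V' -> S' = 0.
Proof.
case=> HU HV HX _ _.
have : U'^T *m (U' *m S' *m V'^T) *m V' = S'.
  by rewrite !mulmxA HU mul1mx -mulmxA HV mulmx1.
by rewrite -HX mulmx0 mul0mx => <-.
Qed.

Lemma loraB0 (n m : nat) (U' : 'M[Real]_n) : loraB 1 U' (0 : 'M[Real]_(n, m)) = 0.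
Proof.
rewrite /loraB.
have -> : sqrt_diag (lead_block 1 (0 : 'M[Real]_(n, m))) = 0.
  apply/matrixP => i j; rewrite !mxE big1 ?sqrtr0 // => l _.
  by rewrite !mxE big1 // => k _; rewrite mxE.
by rewrite mulmx0.
Qed.

Theorem theorem3 :
  exists (n m N r : nat) (W0 : 'M[Real]_(n, m)) (X : 'M[Real]_(m, N)),
    [/\ (m <= N)%N, (1 <= r)%N, (r < \rank W0)%N, (r < minn n m)%N &
    forall (U : 'M[Real]_m) (S : 'M[Real]_(m, N)) (V : 'M[Real]_N),
      is_svd X U S V ->
      forall (U' : 'M[Real]_n) (S' : 'M[Real]_(n, m)) (V' : 'M[Real]_m),
        is_svd (W0 *m Unull r U *m (Unull r U)^T) U' S' V' ->
        let W0' := W0 - loraB r U' S' *m loraA r S' V' in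
        ~ solves_P1 W0 (\rank W0 - r) W0' /\
        ~ solves_P2 W0 X (\rank W0 - r) W0'].
Proof.
exists 2%N, 3%N, 3%N, 1%N, W0e, Xe; split; rewrite ?rankW0 //.
move=> U S V /svd_last [H0 H1] U' S' V'.
rewrite W0Unull // mul0mx => /svd_zero ->.
rewrite loraB0 mul0mx subr0 /solves_P1 /solves_P2 rankW0.
by split => -[].
Qed.
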